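(* Let $\gamma_*\in(0,1)$, $\zeta_*\in(0,\tfrac12)$, and $\varepsilon\in(0,\tfrac23\zeta_* )$. Set $\zeta=\zeta_*-\varepsilon$ and $\gamma=\gamma_*\frac{\zeta_*}{\zeta}$. Let $P_0$ be the Gaussian mixture $(1-\zeta_* )\mathcal{N}(0,1)+\zeta_*\mathcal{N}(\gamma_*,1)$ and $P_1$ the Gaussian mixture $(1-\zeta)\mathcal{N}(0,1)+\zeta\mathcal{N}(\gamma,1)$. Then there is an absolute constant $C>0$ such that \[ \mathrm{KL}(P_1,P_0)\le C\,\varepsilon^2\gamma_*^4. \]
   Context: $\mathrm{KL}(P_1,P_0)=\int \log\frac{dP_1}{dP_0}\,dP_1$ denotes the Kullback–Leibler divergence. *)

(* Defs.v *)
From HB Require Import structures.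
From mathcomp Require Import all_boot all_order all_algebra.
From mathcomp Require Import all_classical all_reals all_analysis.
Set Implicit Arguments. Unset Strict Implicit. Unset Printing Implicit Defensive.
Import Order.TTheory GRing.Theory Num.Theory.
Local Open Scope ring_scope.
Local Open Scope ereal_scope.

(* Density (w.r.t. Lebesgue measure on R) of the two-component Gaussian
   mixture (1 - z) N(0,1) + z N(g,1); normal_pdf m s is the N(m, s^2) density. *)
Definition mix_pdf {R : realType} (z g : R) (x : R) : R :=
  ((1 - z) * normal_pdf 0 1 x + z * normal_pdf g 1 x)%R.

(* KL(P1, P0) = \int log (dP1/dP0) dP1, for P1, P0 with (everywhere positive)
   Lebesgue densities p1, p0:  dP1/dP0 = p1/p0 and dP1 = p1 dx. *)
Definition KL_dens {R : realType} (p1 p0 : R -> R) : \bar R :=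
  \int[@lebesgue_measure R]_(x in setT) ((p1 x * ln (p1 x / p0 x))%R)%:E.

(* Main.v *)
Require Import Defs.
From mathcomp Require Import all_boot all_order all_algebra.
From mathcomp Require Import all_classical all_reals all_analysis.
From mathcomp Require Import ring lra.
Import Order.TTheory GRing.Theory Num.Theory.
Local Open Scope ring_scope.

Section S.
Variable R : realType.
Implicit Types u v M x : R.

Lemma exp_diff_up u v : expR u - expR v <= expR u * (u - v).
Proof.
have h := expR_ge1Dx (v - u).
have e : expR v = expR (v - u) * expR u by rewrite -expRD subrK.
have p := expR_gt0 u.
rewrite e; nra.
Qed.

Definition rr u := expR u - 1 - u.

Lemma rr_diff u v M : `|u| <= M -> `|v| <= M ->
  `|rr u - rr v| <= `|u - v| * (M * expR M).
Proof.
wlog: u v / v <= u.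
  move=> H hu hv; case: (leP v u) => uv; first exact: H.
  by rewrite -normrN opprB [`|u - v|]distrC; apply: H => //; apply: ltW.
move=> vu hu hv.
have M0 : 0 <= M by apply: le_trans hv.
have eM1 : 1 <= expR M by rewrite -expR0 ler_expR.
have eM : 0 <= M * expR M by rewrite mulr_ge0 // expR_ge0.
have h1 := exp_diff_up u v.
have h2 := exp_diff_up v u.
have A : expR u - 1 <= M * expR M.
  case: (leP u 0) => u0.
    have : expR u <= 1 by rewrite expR_le1.
    lra.
  have h3 := exp_diff_up u 0; rewrite expR0 in h3.
  have uM : u <= M by apply: le_trans hu; exact: ler_norm.
  have : expR u <= expR M by rewrite ler_expR.
  have := expR_gt0 u.
  nra.
have B : 1 - expR v <= M * expR M.
  case: (leP 0 v) => v0.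
    have : 1 <= expR v by rewrite -expR0 ler_expR.
    lra.
  have := expR_ge1Dx v.
  have : - v <= M by apply: le_trans hv; rewrite -normrN; exact: ler_norm.
  nra.
rewrite [`|u - v|]ger0_norm ?subr_ge0 //.
rewrite /rr ler_norml; apply/andP; split; nra.
Qed.


Lemma rr0 : rr 0 = 0.
Proof. by rewrite /rr expR0 subrr subr0. Qed.

Lemma D_bound (za zb eps a b x : R) : 0 < b -> b < 1 -> 0 < eps -> 0 < za ->
  zb = za + eps -> za * a = zb * b -> zb < 3 * za ->
  `|eps + za * expR (a * x - a ^+ 2 / 2) - zb * expR (b * x - b ^+ 2 / 2)|
   <= 8 * eps * b ^+ 2 * (`|x| + 2) ^+ 2 * expR (3 * `|x| + 6).
Proof.
move=> b0 b1 e0 za0 ezb eA z3.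
set y := `|x|.
have y0 : 0 <= y by rewrite /y normr_ge0.
have ab : za * (a - b) = eps * b by rewrite mulrBr eA ezb; ring.
have amb : 0 < a - b.
  have : 0 < za * (a - b) by rewrite ab mulr_gt0.
  by rewrite pmulr_rgt0.
have a3 : a <= 3 * b.
  have : za * a <= za * (3 * b) by rewrite eA; nra.
  by rewrite ler_pM2l.
set wa := a * x - a ^+ 2 / 2.
set wb := b * x - b ^+ 2 / 2.
set M := 3 * b * (y + 2).
have xy : `|x| = y by [].
have hx : - y <= x <= y by rewrite -ler_norml.
case/andP: hx => hx1 hx2.
have hwa : `|wa| <= M.
  rewrite /wa /M ler_norml; apply/andP; split; nra.
have hwb' : `|wb| <= b * (y + 2).
  rewrite /wb ler_norml; apply/andP; split; nra.
have hwb : `|wb| <= M by apply: (le_trans hwb'); rewrite /M; nra.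
have hwab : `|wa - wb| <= (a - b) * (y + 2).
  have -> : wa - wb = (a - b) * (x - (a + b) / 2) by rewrite /wa /wb; field.
  rewrite normrM (gtr0_norm amb) ler_pM2l // ler_norml; apply/andP; split; nra.
have M0 : 0 <= M by rewrite /M; nra.
have eM : expR M <= expR (3 * y + 6) by rewrite ler_expR /M; nra.
have eM0 := expR_gt0 M.
set E := expR (3 * y + 6).
have d1 := rr_diff _ _ _ hwa hwb.
have h0 : `|0 : R| <= M by rewrite normr0.
have d2 := rr_diff _ _ _ hwb h0.
rewrite rr0 !subr0 in d2.
set K := M * expR M in d1 d2.
have K0 : 0 <= K by rewrite /K mulr_ge0 // ltW.
have KE : K <= 3 * b * (y + 2) * E.
  rewrite /K /M ler_wpM2l //; nra.
have E1 : 1 <= E by have := expR_ge1Dx (3 * y + 6); rewrite -/E; lra.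
have eq : eps + za * expR wa - zb * expR wb =
   - (a * (eps * b)) / 2 + za * (rr wa - rr wb) - eps * rr wb.
  have ea : expR wa = 1 + wa + rr wa by rewrite /rr; ring.
  have eb : expR wb = 1 + wb + rr wb by rewrite /rr; ring.
  have epsE : eps = za * (a - b) / b by rewrite ab mulfK // gt_eqF.
  rewrite ea eb ezb epsE /wa /wb; field; by rewrite gt_eqF.
rewrite eq.
set r1 := rr wa - rr wb in d1 *.
set r2 := rr wb in d2 *.
have t1 : `|r1| <= (a - b) * (y + 2) * K.
  apply: (le_trans d1); rewrite ler_wpM2r //.
have t1' : za * `|r1| <= eps * b * (y + 2) * K.
  rewrite -ab; have := ler_wpM2l (ltW za0) t1; lra.
have t2 : `|r2| <= b * (y + 2) * K.
  apply: (le_trans d2); rewrite ler_wpM2r //.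
have n1 : `|za * r1| = za * `|r1| by rewrite normrM gtr0_norm.
have n2 : `|eps * r2| = eps * `|r2| by rewrite normrM gtr0_norm.
have n3 : `|- (a * (eps * b)) / 2| = a * eps * b / 2.
  have a0 : 0 < a by lra.
  have p : 0 < a * (eps * b) by rewrite !mulr_gt0.
  rewrite ler0_norm; first by ring.
  lra.
have tri : `|- (a * (eps * b)) / 2 + za * r1 - eps * r2| <=
   `|- (a * (eps * b)) / 2| + `|za * r1| + `|eps * r2|.
  apply: (le_trans (ler_normB _ _)); rewrite lerD2r; exact: ler_normD.
apply: (le_trans tri); rewrite n1 n2 n3.
have yE : 0 <= (y + 2) * E by nra.
have t2' : eps * `|r2| <= eps * (b * (y + 2) * K) by rewrite ler_wpM2l // ltW.
have : eps * b * (y + 2) * K <= eps * b * (y + 2) * (3 * b * (y + 2) * E).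
  rewrite ler_wpM2l //; nra.
have : eps * (b * (y + 2) * K) <= eps * b * (y + 2) * (3 * b * (y + 2) * E).
  rewrite mulrA mulrA ler_wpM2l //; nra.
have : a * eps * b / 2 <= 3 * b * eps * b / 2.
  rewrite ler_pM2r //.
  have : 0 <= (3 * b - a) * (eps * b) by rewrite mulr_ge0 // ?subr_ge0 // mulr_ge0 // ltW.
  nra.
have : b ^+ 2 * eps * 4 <= b ^+ 2 * eps * ((y + 2) ^+ 2 * E).
  apply: ler_wpM2l; first by rewrite mulr_ge0 // ?exprn_ge0 // ltW.
  have : 4 <= (y + 2) ^+ 2 by nra.
  have : 0 <= (y + 2) ^+ 2 by nra.
  nra.
nra.
Qed.

Lemma pdf01 x : normal_pdf 0 1 x = normal_peak 1 * expR (- x ^+ 2 / 2).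
Proof.
rewrite normal_pdfE ?oner_eq0 // /normal_fun subr0 expr1n; congr (_ * expR _).
Qed.

Lemma pdf02 x : normal_pdf 0 2 x = normal_peak 2 * expR (- x ^+ 2 / 8).
Proof.
rewrite normal_pdfE ?pnatr_eq0 // /normal_fun subr0; congr (_ * expR _).
congr (_ / _); rewrite mulr2n; lra.
Qed.

Lemma pdf_shift a x :
  normal_pdf a 1 x = normal_pdf 0 1 x * expR (a * x - a ^+ 2 / 2).
Proof.
rewrite pdf01 normal_pdfE ?oner_eq0 // /normal_fun expr1n -mulrA -expRD.
congr (_ * expR _); rewrite mulr2n; field.
by [].
Qed.


Definition Kc : R := 128 * expR 85 * normal_peak 1 / normal_peak 2.

Lemma pointwise (gs zs eps x : R) : 0 < gs -> gs < 1 -> 0 < zs -> zs < 1 / 2 ->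
  0 < eps -> eps < 2 / 3 * zs ->
  let z := zs - eps in let g := gs * (zs / z) in
  let p1 := mix_pdf z g x in let p0 := mix_pdf zs gs x in
  0 <= p1 * ln (p1 / p0) - (p1 - p0) /\
  p1 * ln (p1 / p0) - (p1 - p0) <= Kc * eps ^+ 2 * gs ^+ 4 * normal_pdf 0 2 x.
Proof.
move=> gs0 gs1 zs0 zs1 e0 e1 z g p1 p0.
have z0 : 0 < z by rewrite /z; lra.
have z3 : zs < 3 * z by rewrite /z; lra.
set phi := normal_pdf 0 1 x.
have c1 : 0 < normal_peak (1 : R) by rewrite normal_peak_gt0 // oner_eq0.
have c2 : 0 < normal_peak (2 : R) by rewrite normal_peak_gt0 // pnatr_eq0.
have phi0 : 0 < phi by rewrite /phi pdf01 mulr_gt0 // expR_gt0.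
set hg := expR (g * x - g ^+ 2 / 2).
set hs := expR (gs * x - gs ^+ 2 / 2).
have hg0 : 0 < hg by exact: expR_gt0.
have hs0 : 0 < hs by exact: expR_gt0.
have ep1 : p1 = (1 - z) * phi + z * (phi * hg) by rewrite /p1 /mix_pdf (pdf_shift g).
have ep0 : p0 = (1 - zs) * phi + zs * (phi * hs) by rewrite /p0 /mix_pdf (pdf_shift gs).
have p0h : phi / 2 <= p0.
  have : 0 <= zs * (phi * hs) by rewrite !mulr_ge0 // ltW.
  have : 0 <= (1 / 2 - zs) * phi by rewrite mulr_ge0 // ?subr_ge0 ltW.
  rewrite ep0; lra.
have p00 : 0 < p0 by lra.
have p10 : 0 < p1.
  have : 0 <= z * (phi * hg) by rewrite !mulr_ge0 // ltW.
  have : 0 < (1 - z) * phi by rewrite mulr_gt0 // subr_gt0 /z; lra.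
  rewrite ep1; lra.
set D := eps + z * hg - zs * hs.
have eD : p1 - p0 = phi * D by rewrite ep1 ep0 /D /z; ring.
have hD := D_bound z zs eps g gs x gs0 gs1 e0 z0.
have {}hD : `|D| <= 8 * eps * gs ^+ 2 * (`|x| + 2) ^+ 2 * expR (3 * `|x| + 6).
  apply: hD => //; first by rewrite /z; ring.
  by rewrite /g; field; rewrite gt_eqF.
set q := p1 / p0.
have q0 : 0 < q by rewrite divr_gt0.
split.
  have hl : ln (q^-1) <= q^-1 - 1.
    have := @le_ln1Dx R (q^-1 - 1); rewrite [1 + _]addrC subrK; apply.
    have : 0 < q^-1 by rewrite invr_gt0.
    lra.
  rewrite lnV ?posrE // in hl.
  have : p1 * (1 - q^-1) <= p1 * ln q by rewrite ler_pM2l //; lra.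
  have -> : p1 * (1 - q^-1) = p1 - p0 by rewrite /q invf_div; field; rewrite gt_eqF.
  lra.
have hu : ln q <= q - 1.
  have := @le_ln1Dx R (q - 1); rewrite [1 + _]addrC subrK; apply; lra.
have s1 : p1 * ln q - (p1 - p0) <= (p1 - p0) ^+ 2 / p0.
  have : p1 * ln q <= p1 * (q - 1) by rewrite ler_pM2l.
  have -> : p1 * (q - 1) = (p1 - p0) ^+ 2 / p0 + (p1 - p0).
    by rewrite /q; field; rewrite gt_eqF.
  lra.
apply: (le_trans s1).
have s2 : (p1 - p0) ^+ 2 / p0 <= 2 * phi * D ^+ 2.
  rewrite ler_pdivrMr // eD.
  have : 0 <= phi * D ^+ 2 by rewrite mulr_ge0 ?sqr_ge0 // ltW.
  nra.
apply: (le_trans s2).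
set y := `|x| in hD.
have y0 : 0 <= y by rewrite /y normr_ge0.
have xy : x ^+ 2 = y ^+ 2 by rewrite /y real_normK // num_real.
set E := expR (3 * y + 6) in hD.
have E0 : 0 < E by exact: expR_gt0.
have D2 : D ^+ 2 <= 64 * eps ^+ 2 * gs ^+ 4 * ((y + 2) ^+ 4 * E ^+ 2).
  rewrite -real_normK ?num_real //.
  have nD := normr_ge0 D.
  have : `|D| ^+ 2 <= (8 * eps * gs ^+ 2 * (y + 2) ^+ 2 * E) ^+ 2.
    by rewrite ler_sqr // ?nnegrE //; lra.
  move=> h; apply: (le_trans h); rewrite le_eqVlt; apply/orP; left; apply/eqP; ring.
set u := expR (y + 1).
have yu : y + 2 <= u by have := expR_ge1Dx (y + 1); rewrite /u; lra.
have u4 : (y + 2) ^+ 4 <= u ^+ 4.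
  by rewrite ler_pXn2r // ?nnegrE //; lra.
have key : expR (- x ^+ 2 / 2) * ((y + 2) ^+ 4 * E ^+ 2) <= expR 85 * expR (- x ^+ 2 / 8).
  have h1 : expR (- x ^+ 2 / 2) * ((y + 2) ^+ 4 * E ^+ 2) <= expR (- x ^+ 2 / 2) * (u ^+ 4 * E ^+ 2).
    rewrite ler_pM2l ?expR_gt0 // ler_pM2r //; exact: exprn_gt0.
  apply: (le_trans h1).
  rewrite /u /E -!expRM_natl -!expRD ler_expR xy.
  have : 0 <= (y - 40 / 3) ^+ 2 by exact: sqr_ge0.
  nra.
rewrite /Kc pdf02 /phi pdf01.
have ee : 0 <= eps ^+ 2 * gs ^+ 4 by rewrite mulr_ge0 // exprn_ge0 // ltW.
have := ler_wpM2l (mulr_ge0 (ltW c1) ee) key.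
have : 2 * (normal_peak 1 * expR (- x ^+ 2 / 2)) * D ^+ 2 <=
   2 * (normal_peak 1 * expR (- x ^+ 2 / 2)) * (64 * eps ^+ 2 * gs ^+ 4 * ((y + 2) ^+ 4 * E ^+ 2)).
  rewrite ler_wpM2l // mulr_ge0 // mulr_ge0 // ?ltW // expR_ge0.
move=> h2 h3; apply: (le_trans h2).
have -> : 128 * expR 85 * normal_peak 1 / normal_peak 2 * eps ^+ 2 * gs ^+ 4 *
   (normal_peak 2 * expR (- x ^+ 2 / 8)) =
   128 * (normal_peak 1 * (eps ^+ 2 * gs ^+ 4) * (expR 85 * expR (- x ^+ 2 / 8))).
  by field; rewrite gt_eqF.
set L := normal_peak 1 * (eps ^+ 2 * gs ^+ 4) in h3 *.
set Q := (y + 2) ^+ 4 * E ^+ 2 in h3 *.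
set ex := expR (- x ^+ 2 / 2) in h3 *.
have -> : 2 * (normal_peak 1 * ex) * (64 * eps ^+ 2 * gs ^+ 4 * Q) = 128 * (L * (ex * Q)).
  by rewrite /L; ring.
rewrite ler_pM2l //.
Qed.


Lemma mix_meas (z g : R) : measurable_fun setT (mix_pdf z g).
Proof.
rewrite /mix_pdf; apply: measurable_realfun.measurable_funD; apply: measurable_realfun.measurable_funM => //;
  exact: measurable_normal_pdf.
Qed.

Lemma mix_int (z g : R) :
  (@lebesgue_measure R).-integrable setT (fun x => (mix_pdf z g x)%:E) /\
  (\int[@lebesgue_measure R]_(x in setT) (mix_pdf z g x)%:E = 1)%E.
Proof.
have -> : (fun x => (mix_pdf z g x)%:E) =
  ((fun x => (1 - z)%:E * (normal_pdf 0 1 x)%:E) \+ (fun x => z%:E * (normal_pdf g 1 x)%:E))%E.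
  by apply/funext => x; rewrite /mix_pdf /= EFinD !EFinM.
have i1 := integrableZl measurableT (1 - z) (integrable_normal_pdf 0 1).
have i2 := integrableZl measurableT z (integrable_normal_pdf g 1).
split; first exact: integrableD.
rewrite integralD //= integralZl // ?integral_normal_pdf ?integralZl //
  ?integral_normal_pdf; first by rewrite !mule1 -EFinD subrK.
all: exact: integrable_normal_pdf.
Qed.

End S.

Theorem lemma10 (R : realType) :
  exists C : R, 0 < C /\
  forall gs zs eps : R,
    0 < gs -> gs < 1 ->
    0 < zs -> zs < 1 / 2 ->
    0 < eps -> eps < 2 / 3 * zs ->
    let z := zs - eps in
    let g := gs * (zs / z) in
    (KL_dens (mix_pdf z g) (mix_pdf zs gs)
      <= (C * eps ^+ 2 * gs ^+ 4)%:E)%E.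
Proof.
exists (Kc R); split.
  rewrite /Kc divr_gt0 ?normal_peak_gt0 ?pnatr_eq0 // mulr_gt0 ?expR_gt0 //.
  by rewrite normal_peak_gt0 // oner_eq0.
move=> gs zs eps gs0 gs1 zs0 zs1 e0 e1; cbv zeta.
set z := zs - eps; set g := gs * (zs / z).
have pw := fun x => @pointwise R gs zs eps x gs0 gs1 zs0 zs1 e0 e1.
set p1 := mix_pdf z g; set p0 := mix_pdf zs gs.
set K := Kc R * eps ^+ 2 * gs ^+ 4.
set h := fun x => p1 x * ln (p1 x / p0 x) - (p1 x - p0 x).
have [i1 I1] := @mix_int R z g.
have [i0 I0] := @mix_int R zs gs.
have z0 : 0 < z by rewrite /z; lra.
have pos1 x : 0 < p1 x.
  rewrite /p1 /mix_pdf; have := normal_pdf_ge0 g 1 x.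
  have : 0 < normal_pdf 0 1 x by rewrite pdf01 mulr_gt0 ?expR_gt0 // normal_peak_gt0 // oner_eq0.
  have : 0 < 1 - z by rewrite /z; lra.
  nra.
have pos0 x : 0 < p0 x.
  rewrite /p0 /mix_pdf; have := normal_pdf_ge0 gs 1 x.
  have : 0 < normal_pdf 0 1 x by rewrite pdf01 mulr_gt0 ?expR_gt0 // normal_peak_gt0 // oner_eq0.
  have : 0 < 1 - zs by lra.
  nra.
have mh : measurable_fun setT h.
  have -> : h = fun x => p1 x * (ln (p1 x) - ln (p0 x)) - (p1 x - p0 x).
    apply/funext => x; rewrite /h ln_div // posrE //.
  apply: measurable_realfun.measurable_funB; last exact: measurable_realfun.measurable_funB (@mix_meas R _ _) (@mix_meas R _ _).
  apply: measurable_realfun.measurable_funM; first exact: (@mix_meas R).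
  by apply: measurable_realfun.measurable_funB; apply: measurableT_comp (@measurable_realfun.measurable_ln R) (@mix_meas R _ _).
have iK := integrableZl measurableT K (integrable_normal_pdf 0 2).
have ih : (@lebesgue_measure R).-integrable setT (fun x => (h x)%:E).
  apply: le_integrable iK => //.
    by apply/measurable_realfun.measurable_EFinP.
  move=> x _; have [a b] := pw x; rewrite -EFinM !abse_EFin lee_fin.
  rewrite ger0_norm // ger0_norm; first exact: b.
  exact: le_trans b.
rewrite /KL_dens.
have -> : (fun x => ((p1 x * ln (p1 x / p0 x))%:E)) =
    ((fun x => (h x)%:E) \+ (fun x => (p1 x)%:E - (p0 x)%:E))%E.
  by apply/funext => x; rewrite /h /= -EFinB -EFinD subrK.
rewrite integralD //; last exact: integrableB.
rewrite integralB // I1 I0 subee // adde0.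
apply: (@le_trans _ _ (\int[@lebesgue_measure R]_(x in setT) (K%:E * (normal_pdf 0 2 x)%:E))%E).
  apply: le_integral => // x _; have [a b] := pw x; rewrite -EFinM lee_fin; exact: b.
by rewrite integralZl // ?integral_normal_pdf ?mule1 //; exact: integrable_normal_pdf.
Qed.
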